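(* Let $n\ge1$, $a\in\mathcal{IS}_n$, and consider the semigroup $(\mathcal{IS}_n,*_a)$. Let $x\in\mathcal{IS}_n$. If $\operatorname{ran}(x)\subseteq\operatorname{dom}(a)$, then the $\mathcal{R}$-class of $x$ is $$R_x=\{y\in\mathcal{IS}_n : \operatorname{dom}(y)=\operatorname{dom}(x),\ \operatorname{ran}(y)\subseteq\operatorname{dom}(a)\};$$ otherwise $R_x=\{x\}$.
   Context: $\mathcal{IS}_n$ is the set of all partial injective maps of $N=\{1,\dots,n\}$, including the empty map; $\operatorname{dom}(x)$, $\operatorname{ran}(x)$ denote domain and range. Maps are composed from left to right: $(xy)(i)=y(x(i))$, defined exactly when $i\in\operatorname{dom}(x)$ and $x(i)\in\operatorname{dom}(y)$. For fixed $a\in\mathcal{IS}_n$, $x*_a y:=xay$. Green's relations in a semigroup $S$: with $S^1$ the semigroup $S$ with an identity adjoined, $x\mathcal{L}y$ iff $S^1x=S^1y$, $x\mathcal{R}y$ iff $xS^1=yS^1$, $\mathcal{H}=\mathcal{L}\cap\mathcal{R}$, $\mathcal{D}=\mathcal{L}\circ\mathcal{R}$ (which equals $\mathcal{R}\circ\mathcal{L}$). $L_x,R_x,H_x,D_x$ denote the corresponding classes of $x$, here computed in $(\mathcal{IS}_n,*_a)$. *)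

(* Defs.v *)
From mathcomp Require Import all_boot.
Set Implicit Arguments. Unset Strict Implicit. Unset Printing Implicit Defensive.

(* A partial map (type PIM) of N = {1..n}, modelled on 'I_n (= {0..n-1}): None = undefined. *)
Definition PIM (n : nat) := {ffun 'I_n -> option 'I_n}.

Definition pinj n (x : PIM n) : bool :=
  [forall i, forall j, (x i != None) ==> (x i == x j) ==> (i == j)].

Definition ISn n : {set PIM n} := [set x | pinj x].

Definition dom n (x : PIM n) : {set 'I_n} := [set i | x i != None].
Definition ran n (x : PIM n) : {set 'I_n} := [set j | [exists i, x i == Some j]].

(* left-to-right composition: (x y)(i) = y (x i) *)
Definition comp n (x y : PIM n) : PIM n :=
  [ffun i => if x i is Some j then y j else None].

Definition sand n (a x y : PIM n) : PIM n := comp (comp x a) y.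

(* principal right ideal x S^1 in (IS_n, *_a) *)
Definition rideal n (a x : PIM n) : {set PIM n} :=
  x |: [set sand a x s | s in ISn n].

Definition Rclass n (a x : PIM n) : {set PIM n} :=
  [set y in ISn n | rideal a y == rideal a x].

(* Main.v *)
Require Import Defs.
From mathcomp Require Import all_boot.

Lemma pinjP n (x : PIM n) :
  reflect (forall i j, x i != None -> x i = x j -> i = j) (pinj x).
Proof.
apply: (iffP forallP) => [H i j Hi Hij | H i].
  by have /forallP/(_ j)/implyP/(_ Hi)/implyP := H i; move/(_ (introT eqP Hij))/eqP.
apply/forallP => j; apply/implyP => Hi; apply/implyP => /eqP Hij; apply/eqP; exact: H.
Qed.

Lemma L1 n (x y : PIM n) : dom (Defs.comp x y) \subset dom x.
Proof. by apply/subsetP => i; rewrite !inE ffunE; case: (x i). Qed.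

Lemma L3 n (y a : PIM n) : ~~ (ran y \subset dom a) -> dom (Defs.comp y a) \proper dom y.
Proof.
case/subsetPn => j; rewrite !inE => /existsP[i /eqP Hi] Hj.
rewrite properE L1 /=; apply/subsetPn; exists i; rewrite !inE ?ffunE Hi //.
Qed.

Lemma L5 n (x y : PIM n) : pinj x -> pinj y -> pinj (Defs.comp x y).
Proof.
move=> /pinjP Hx /pinjP Hy; apply/pinjP => i j; rewrite !ffunE.
case Ei: (x i) => [k|] //; case Ej: (x j) => [k'|]; last by move=> H E; rewrite E in H.
move=> Hk E; have kk := Hy _ _ Hk E; apply: Hx; by rewrite ?Ei ?Ej ?kk.
Qed.

Lemma L6 n (a x : PIM n) : pinj a -> pinj x -> ran x \subset dom a ->
  rideal a x = [set z in ISn n | dom z \subset dom x].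
Proof.
move=> Ha Hx Hr; apply/setP => z; rewrite in_setU1 !inE; apply/idP/idP.
  case/orP=> [/eqP-> | /imsetP[s Hs ->]]; first by rewrite Hx subxx.
  rewrite inE in Hs.
  rewrite /sand !L5 //=; by apply/subsetP => i /(subsetP (L1 _ _ _)) /(subsetP (L1 _ _ _)).
move=> /andP[Hz Hd]; apply/orP; right; apply/imsetP.
set f := Defs.comp x a.
have Hf : pinj f by apply: L5.
pose s : PIM n := [ffun j => if [pick i | f i == Some j] is Some i then z i else None].
exists s.
  rewrite inE; apply/pinjP => j j'; rewrite !ffunE.
  case: pickP => [i /eqP Hi|]; last by [].
  case: pickP => [i' /eqP Hi'|]; last by move=> _ H E; rewrite E in H.
  move=> Hz0 E; have ii : i = i' by move/pinjP: Hz; apply.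
  by move: Hi; rewrite ii Hi' => -[].
apply/ffunP => i; rewrite /sand -/f ffunE.
case Efi: (f i) => [j|].
  rewrite ffunE; case: pickP => [i' /eqP Hi'|].
    by have -> : i' = i by move/pinjP: Hf; apply; rewrite Hi' ?Efi.
  by move/(_ i); rewrite Efi eqxx.
have : i \notin dom f by rewrite inE Efi.
have Edf : dom f = dom x.
  apply/eqP; rewrite eqEsubset L1; apply/subsetP => k; rewrite !inE /f ffunE.
  case Ek: (x k) => [m|] // _.
  have : m \in ran x by rewrite inE; apply/existsP; exists k; rewrite Ek.
  by move/(subsetP Hr); rewrite inE.
rewrite Edf => Hi.
have : i \notin dom z by apply: contra Hi; apply: (subsetP Hd).
by rewrite inE negbK => /eqP.
Qed.

Lemma key n (a y z : PIM n) : z \in rideal a y -> z = y \/ dom z \subset dom (Defs.comp y a).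
Proof.
rewrite in_setU1 => /orP[/eqP->|/imsetP[s _ ->]]; [by left | right; exact: L1].
Qed.

Theorem theorem4 (n : nat) (a x : PIM n) :
  0 < n -> a \in ISn n -> x \in ISn n ->
  (ran x \subset dom a ->
     Rclass a x = [set y in ISn n | (dom y == dom x) && (ran y \subset dom a)]) /\
  (~~ (ran x \subset dom a) -> Rclass a x = [set x]).
Proof.
move=> _; rewrite !inE => Ha Hx.
have dsub : forall y z, z \in rideal a y -> dom z \subset dom y.
  move=> y z /key[->|H]; [exact: subxx | exact: (subset_trans H (L1 _ _ _))].
split.
- move=> Hr; apply/setP => y; rewrite !inE.
  apply/andP/andP => [[Hy /eqP E] | [Hy /andP[/eqP Hd Hry]]].
    split=> //.
    have yx : y \in rideal a x by rewrite -E setU11.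
    have xy : x \in rideal a y by rewrite E setU11.
    have Hd : dom y = dom x by apply/eqP; rewrite eqEsubset (dsub _ _ yx) (dsub _ _ xy).
    rewrite Hd eqxx /=; apply/negPn/negP => Hn.
    have Hp := L3 _ _ _ Hn; case: (key _ _ _ _ xy) => [Exy | Hs].
      by move: Hn; rewrite -Exy Hr.
    by move: Hp; rewrite properE Hd Hs andbF.
  by split=> //; apply/eqP; rewrite (L6 _ _ _ Ha Hy Hry) (L6 _ _ _ Ha Hx Hr) Hd.
- move=> Hn; apply/setP => y; rewrite !inE.
  apply/andP/eqP => [[Hy /eqP E]|->]; last by rewrite Hx eqxx.
  case: (eqVneq y x) => // Hne.
  have yx : y \in rideal a x by rewrite -E setU11.
  have xy : x \in rideal a y by rewrite E setU11.
  case: (key _ _ _ _ yx) => [Eq|H1]; first by rewrite Eq eqxx in Hne.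
  case: (key _ _ _ _ xy) => [Eq|H2]; first by rewrite Eq eqxx in Hne.
  have Hp := L3 _ _ _ Hn.
  have : dom x \subset dom (Defs.comp x a).
    exact: (subset_trans H2 (subset_trans (L1 _ _ _) H1)).
  by move: Hp; rewrite properE => /andP[_ /negP].
Qed.
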